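(* Let $d\ge3$ and $2\le k\le d-1$. If the characteristic of $\mathbb F_q$ is sufficiently large (in terms of $d$), then the algebraic set $$\overline{\mathcal H}_k=\{x\in\overline{\mathbb F}_q^{\,d}:\ x_1^{j+1}+\cdots+x_k^{j+1}-x_{k+j}^{j+1}=0,\ j=1,\dots,d-k\}$$ is smooth at every point other than the origin if and only if $d-k\in\{1,2,3\}$. More precisely: if $d-k\ge4$ there exists $x\in\overline{\mathcal H}_k\setminus\{0\}$ at which the $(d-k)\times d$ Jacobian matrix $\big[\partial h_j/\partial x_i(x)\big]$ of $h_j(x)=x_1^{j+1}+\cdots+x_k^{j+1}-x_{k+j}^{j+1}$ has rank $<d-k$, while if $d-k\in\{1,2,3\}$ this Jacobian matrix has rank exactly $d-k$ at every $x\in\overline{\mathcal H}_k\setminus\{0\}$.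
   Context: $\overline{\mathbb F}_q$ denotes the algebraic closure of the finite field $\mathbb F_q$. $\overline{\mathcal H}_k$ is absolutely irreducible of dimension $k$, and smoothness at a point is understood via the Jacobian criterion (the Jacobian of the defining equations has rank equal to $d-\dim\overline{\mathcal H}_k=d-k$). *)

(* Defs.v *)
From HB Require Import structures.
From mathcomp Require Import all_boot all_order all_algebra.
Set Implicit Arguments. Unset Strict Implicit. Unset Printing Implicit Defensive.
Import Order.TTheory GRing.Theory Num.Theory.
Local Open Scope ring_scope.

(* h_j(y) = y_1^{j+1} + ... + y_k^{j+1} - y_{k+j}^{j+1}, for j = j0 + 1,
   j0 = 0 .. d-k-1; coordinates are 0-based: x_i (1-based) is y (i-1). *)
Definition hfun (R : comNzRingType) (d k j0 : nat) (y : 'I_d -> R) : R :=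
  \sum_(i < d | (i < k)%N) y i ^+ j0.+2
  - \sum_(i < d | i == (k + j0)%N :> nat) y i ^+ j0.+2.

Definition freeAt (F : fieldType) (d : nat) (x : 'rV[F]_d) (i : 'I_d)
  : 'I_d -> {poly F} :=
  fun l => if l == i then 'X else (x ord0 l)%:P.

Definition partial_h (F : fieldType) (d k j0 : nat) (x : 'rV[F]_d) (i : 'I_d) : F :=
  (hfun k j0 (freeAt x i))^`().[x ord0 i].

Definition jacH (F : fieldType) (d k : nat) (x : 'rV[F]_d) : 'M[F]_(d - k, d) :=
  \matrix_(j < d - k, i < d) partial_h k j x i.

Definition inH (F : fieldType) (d k : nat) (x : 'rV[F]_d) : Prop :=
  forall j0 : 'I_(d - k), hfun k j0 (fun i => x ord0 i) = 0.

(* F is an algebraic closure of F_p: algebraically closed, of characteristic p,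
   and algebraic over F_p (every element lies in some finite field F_{p^n}). *)
Definition is_alg_closure_Fp (p : nat) (F : closedFieldType) : Prop :=
  p \in [pchar F] /\ forall x : F, exists2 n : nat, (0 < n)%N & x ^+ (p ^ n) = x.

(* Main.v *)
Require Import Defs.
From HB Require Import structures.
From mathcomp Require Import all_boot all_order all_algebra.
From mathcomp Require Import ring zify.
Import GRing.Theory.
Local Open Scope ring_scope.

Set Implicit Arguments. Unset Strict Implicit.

Definition cnt (F : fieldType) d k (y : 'I_d -> F) a :=
  #|[set i : 'I_d | (i < k)%N && (y i == a)]|.

Lemma split_sum (F : fieldType) d k (y : 'I_d -> F) a b e :
  a != b -> (forall i : 'I_d, (i < k)%N -> [|| y i == 0, y i == a | y i == b]) ->
  (0 < e)%N ->
  \sum_(i < d | (i < k)%N) y i ^+ e = a ^+ e *+ cnt k y a + b ^+ e *+ cnt k y b.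
Proof.
move=> nab hy he.
rewrite (bigID (fun i => y i == a)) /= [X in _ + X](bigID (fun i => y i == b)) /=.
rewrite [X in _ + (_ + X)]big1 ?addr0; last first.
  move=> i /andP[/andP[ik /negbTE ya] /negbTE yb].
  by move: (hy i ik); rewrite ya yb !orbF => /eqP ->; rewrite expr0n; case: e he.
rewrite /cnt -!sumr_const; congr (_ + _); apply: eq_big.
- by move=> i; rewrite inE.
- by move=> i /andP[_ /eqP ->].
- move=> i; rewrite inE; case: (i < k)%N => //=.
  by case: eqP => // ->; rewrite (negbTE nab).
- by move=> i /andP[_ /eqP ->].
Qed.

Lemma cnt_bound (F : fieldType) d k (y : 'I_d -> F) a b :
  a != b -> (cnt k y a + cnt k y b <= d)%N.
Proof.
move=> nab; rewrite /cnt -cardsUI.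
have -> : [set i : 'I_d | (i < k)%N && (y i == a)] :&: [set i : 'I_d | (i < k)%N && (y i == b)] = set0.
  apply/setP => i; rewrite !inE; case: (i < k)%N => //=.
  by case: eqP => // ->; rewrite (negbTE nab).
by rewrite cards0 addn0; apply: leq_trans (max_card _) _; rewrite card_ord.
Qed.

Lemma natr_nz (F : fieldType) p n : p \in [pchar F] -> (0 < n)%N -> (n < p)%N ->
  (n%:R : F) != 0.
Proof.
move=> hp n0 np; rewrite -(dvdn_pcharf hp).
by apply/negP => /(dvdn_leq n0); rewrite leqNgt np.
Qed.

Lemma cnt_pos (F : fieldType) d k (y : 'I_d -> F) (i : 'I_d) :
  (i < k)%N -> (0 < cnt k y (y i))%N.
Proof. by move=> ik; apply/card_gt0P; exists i; rewrite inE ik eqxx. Qed.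

Set Implicit Arguments. Unset Strict Implicit.

Lemma single (F : fieldType) p d k (y : 'I_d -> F) v e :
  p \in [pchar F] -> (d < p)%N -> v != 0 ->
  (exists2 i0 : 'I_d, (i0 < k)%N & y i0 = v) ->
  (forall i : 'I_d, (i < k)%N -> y i != 0 -> y i = v) -> (0 < e)%N ->
  \sum_(i < d | (i < k)%N) y i ^+ e != 0.
Proof.
move=> hp dp v0 [i0 i0k yi0] hy he.
have v0' : v != 0 by [].
rewrite (@split_sum F d k y v 0 e) //; last first.
  move=> i ik; case: (eqVneq (y i) 0) => //= yi; by rewrite (hy i ik yi) eqxx.
rewrite expr0n; case: e he => // e _; rewrite /= mul0rn addr0 -mulr_natr.
rewrite mulf_neq0 ?expf_neq0 //.
apply: (natr_nz hp); first by rewrite -yi0 cnt_pos.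
apply: leq_ltn_trans dp; apply: leq_trans (cnt_bound k y v0'); exact: leq_addr.
Qed.

Lemma two (F : fieldType) p d k (y : 'I_d -> F) (a b : F) :
  p \in [pchar F] -> (d < p)%N -> a != b -> a != 0 ->
  (exists2 i0 : 'I_d, (i0 < k)%N & y i0 = a) ->
  (forall i : 'I_d, (i < k)%N -> [|| y i == 0, y i == a | y i == b]) ->
  \sum_(i < d | (i < k)%N) y i ^+ 2 = 0 ->
  \sum_(i < d | (i < k)%N) y i ^+ 4 = 0 -> False.
Proof.
move=> hp dp nab a0 [i0 i0k yi0] hy.
rewrite !(@split_sum F d k y a b) //.
have na0 : (0 < cnt k y a)%N by rewrite -yi0 cnt_pos.
have nb_ : (cnt k y a + cnt k y b <= d)%N by apply: cnt_bound.
move: (cnt k y a) (cnt k y b) na0 nb_ => na nb na0 nb_.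
have s0 : ((na + nb)%:R : F) != 0.
  apply: (natr_nz hp); first by rewrite addn_gt0 na0.
  exact: leq_ltn_trans dp.
have al0 : (na%:R : F) != 0.
  apply: (natr_nz hp) => //; apply: leq_ltn_trans dp; apply: leq_trans nb_; exact: leq_addr.
rewrite natrD in s0.
rewrite -(mulr_natr (a^+2)) -(mulr_natr (b^+2)) -(mulr_natr (a^+4)) -(mulr_natr (b^+4)) => e2 e4.
have A0 : a ^+ 2 != 0 by rewrite expf_neq0.
have h1 : (na%:R * a ^+ 2) * (a ^+ 2 - b ^+ 2) = 0.
  have -> : (na%:R * a ^+ 2) * (a ^+ 2 - b ^+ 2) =
     (a ^+ 4 * na%:R + b ^+ 4 * nb%:R) - b ^+ 2 * (a ^+ 2 * na%:R + b ^+ 2 * nb%:R) by ring.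
  by rewrite e2 e4 mulr0 subr0.
move/eqP: h1; rewrite !mulf_eq0 (negbTE al0) (negbTE a0) /= subr_eq0 => /eqP AB.
move/eqP: e2; rewrite -AB -mulrDr mulf_eq0 (negbTE A0) /=.
by rewrite (negbTE s0).
Qed.

Lemma core (F : fieldType) p d k (y : 'I_d -> F) (c0 c1 c2 : F) (i0 : 'I_d) :
  p \in [pchar F] -> (d < p)%N -> (i0 < k)%N -> y i0 != 0 ->
  (forall i : 'I_d, (i < k)%N -> y i != 0 -> c0 + c1 * y i + c2 * y i ^+ 2 = 0) ->
  (c0 != 0 -> \sum_(i < d | (i < k)%N) y i ^+ 2 = 0) ->
  (c1 != 0 -> \sum_(i < d | (i < k)%N) y i ^+ 3 = 0) ->
  (c2 != 0 -> \sum_(i < d | (i < k)%N) y i ^+ 4 = 0) ->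
  [|| c0 != 0, c1 != 0 | c2 != 0] -> False.
Proof.
move=> hp dp i0k a0 hq h0 h1 h2 hc.
set a := y i0 in a0.
have qa := hq i0 i0k a0.
case: (eqVneq c2 0) => [c20 | c2n].
  rewrite c20 mul0r addr0 in qa hq.
  case: (eqVneq c1 0) => [c10 | c1n].
    by rewrite c10 mul0r addr0 in qa; move: hc; rewrite qa c10 c20 eqxx.
  have hall : forall i : 'I_d, (i < k)%N -> y i != 0 -> y i = a.
    move=> i ik yi; apply: (mulfI c1n); apply: (addrI c0).
    by have := hq i ik yi; rewrite mul0r addr0 => ->; rewrite qa.
  by move: (single (y:=y) (e:=3) hp dp a0 (ex_intro2 _ _ i0 i0k erefl) hall isT); rewrite (h1 c1n) eqxx.
have s4 := h2 c2n.
case: (boolP [exists i : 'I_d, [&& (i < k)%N, y i != 0 & y i != a]]) => [/existsP[i1 /and3P[i1k b0 nba]] | /existsPn hn].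
  set b := y i1 in b0 nba.
  have qb := hq i1 i1k b0.
  have ec1 : c1 = - c2 * (a + b).
    apply/eqP; rewrite -subr_eq0; apply/eqP.
    have : (b - a) * (c1 + c2 * (a + b)) = 0.
      have -> : (b - a) * (c1 + c2 * (a + b)) =
        (c0 + c1 * b + c2 * b ^+ 2) - (c0 + c1 * a + c2 * a ^+ 2) by ring.
      by rewrite qb qa subrr.
    move/eqP; rewrite mulf_eq0 subr_eq0 (negbTE nba) /= => /eqP <-; ring.
  have ec0 : c0 = c2 * (a * b).
    have -> : c0 = (c0 + c1 * a + c2 * a ^+ 2) - c1 * a - c2 * a ^+ 2 by ring.
    rewrite qa ec1; ring.
  have c0n : c0 != 0 by rewrite ec0 !mulf_neq0.
  apply: (@two F p d k y a b hp dp) => //.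
  - by rewrite eq_sym.
  - by exists i0.
  - move=> i ik; case: (eqVneq (y i) 0) => //= yi.
    case: (eqVneq (y i) a) => //= yia.
    have qc := hq i ik yi.
    have : (y i - a) * (c1 + c2 * (y i + a)) = 0.
      have -> : (y i - a) * (c1 + c2 * (y i + a)) =
        (c0 + c1 * y i + c2 * y i ^+ 2) - (c0 + c1 * a + c2 * a ^+ 2) by ring.
      by rewrite qc qa subrr.
    move/eqP; rewrite mulf_eq0 subr_eq0 (negbTE yia) /= ec1.
    have -> : - c2 * (a + b) + c2 * (y i + a) = c2 * (y i - b) by ring.
    by rewrite mulf_eq0 (negbTE c2n) subr_eq0.
  - exact: h0.
have hall : forall i : 'I_d, (i < k)%N -> y i != 0 -> y i = a.
  move=> i ik yi; move: (hn i); rewrite ik yi /= negbK => /eqP //.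
by move: (single (y:=y) (e:=4) hp dp a0 (ex_intro2 _ _ i0 i0k erefl) hall isT); rewrite s4 eqxx.
Qed.

Set Implicit Arguments. Unset Strict Implicit.

Lemma sum_ind (R : nzRingType) n (P : pred 'I_n) (i : 'I_n) :
  \sum_(l < n | P l) ((l == i)%:R : R) = (P i)%:R.
Proof.
rewrite big_mkcond (bigD1 i) //= eqxx big1 ?addr0; first by case: (P i).
by move=> l /negbTE ->; case: (P l).
Qed.

Lemma partial_hE (F : fieldType) d k j0 (x : 'rV[F]_d) i :
  partial_h k j0 x i =
  (x ord0 i ^+ j0.+1 *+ j0.+2) * ((i < k)%N%:R - (i == k + j0 :> nat)%:R).
Proof.
have E l : ((freeAt x i l ^+ j0.+2)^`()).[x ord0 i] =
   (l == i)%:R * (x ord0 i ^+ j0.+1 *+ j0.+2).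
  rewrite /freeAt; case: eqP => _.
    by rewrite derivXn hornerMn hornerXn mul1r.
  by rewrite -rmorphXn derivC horner0 mul0r.
rewrite /partial_h /hfun derivB hornerD hornerN !raddf_sum /= !horner_sum.
under eq_bigr do rewrite E.
under [X in _ - X]eq_bigr do rewrite E.
rewrite -!big_distrl /= !sum_ind.
ring.
Qed.

Lemma jacE (F : fieldType) d k (x : 'rV[F]_d) j i :
  jacH k x j i = j.+2%:R * x ord0 i ^+ j.+1 * ((i < k)%N%:R - (i == k + j :> nat)%:R).
Proof. by rewrite mxE partial_hE mulr_natl. Qed.

Lemma rank_lt (F : fieldType) m n (A : 'M[F]_(m,n)) (u : 'rV_m) :
  u != 0 -> u *m A = 0 -> (\rank A < m)%N.
Proof.
move=> un uA; rewrite ltnNge row_leq_rank; apply/negP => /row_freeP [B AB].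
by move/eqP: un; apply; rewrite -[u]mulmx1 -AB mulmxA uA mul0mx.
Qed.

Lemma rank_full (F : fieldType) m n (A : 'M[F]_(m,n)) :
  \rank A = m \/ exists2 u : 'rV_m, u != 0 & u *m A = 0.
Proof.
case: (ltngtP (\rank A) m) => [lt|gt|eq]; last by left.
- right; exists (nz_row (kermx A)).
  + by rewrite nz_row_eq0 -mxrank_eq0 mxrank_ker subn_eq0 -ltnNge.
  + apply/sub_kermxP; exact: nz_row_sub.
- by move: (rank_leq_row A); rewrite leqNgt gt.
Qed.

Lemma sum_at (R : nmodType) d (f : 'I_d -> R) n (o : 'I_d) :
  nat_of_ord o = n -> \sum_(i < d | nat_of_ord i == n) f i = f o.
Proof. by move=> <-; apply: big_pred1 => i. Qed.

Lemma sum_lt (R : nmodType) d k (f : nat -> R) : (k <= d)%N ->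
  \sum_(i < d | (i < k)%N) f i = \sum_(0 <= i < k) f i.
Proof.
move=> kd; rewrite -(big_mkord (fun i => (i < k)%N)) (big_nat_widen 0 k d xpredT) //.
Qed.

Lemma root_ex (F : closedFieldType) n (c : F) : (0 < n)%N -> exists z : F, z ^+ n = c.
Proof.
move=> n0; have [z hz] := @solve_monicpoly F n (fun i => if i == 0%N then c else 0) n0.
exists z; rewrite hz; case: n n0 {hz} => // n _.
rewrite big_ord_recl /= expr0 mulr1 big1 ?addr0 // => i _.
by rewrite mul0r.
Qed.

Lemma regroup (R : nmodType) m (w : 'I_m -> nat -> R) (f : 'I_m -> R) :
  (m <= 3)%N -> (forall j, f j = w j j) ->
  \sum_(j < m) f j = \sum_(t < 3) \sum_(j < m | nat_of_ord j == t) w j t.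
Proof.
move=> m3 fw.
under [RHS]eq_bigr do rewrite big_mkcond.
rewrite exchange_big /=; apply: eq_bigr => j _.
have j3 : (j < 3)%N by apply: leq_trans m3.
rewrite (bigD1 (Ordinal j3)) //= eqxx fw big1 ?addr0 // => t.
rewrite -val_eqE /= eq_sym => /negbTE -> //.
Qed.



Unset Implicit Arguments.
Set Strict Implicit.


Lemma root_exb (F : closedFieldType) n (c : F) : (0 < n)%N -> exists z : F, z ^+ n == c.
Proof. by move=> n0; have [z hz] := root_ex c n0; exists z; rewrite hz. Qed.

Lemma part4 (d : nat) p (F : closedFieldType) k :
  p \in [pchar F] -> (d < p)%N -> (2 <= k)%N -> (k <= d - 1)%N -> (4 <= d - k)%N ->
  exists x : 'rV[F]_d, [/\ inH k x, x != 0 & (\rank (jacH k x) < d - k)%N].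
Proof.
move=> hp dp k2 kd m4.
pose r j := xchoose (@root_exb F j.+2 (1 + (-1) ^+ j.+2) isT).
have hr j : r j ^+ j.+2 = 1 + (-1) ^+ j.+2 by apply/eqP; exact: (xchooseP (@root_exb F j.+2 (1 + (-1) ^+ j.+2) isT)).
have r1 : r 1%N = 0.
  have := hr 1%N; rewrite -signr_odd /= expr1 subrr => /eqP.
  by rewrite expf_eq0 /= => /eqP.
have r3 : r 3%N = 0.
  have := hr 3%N; rewrite -signr_odd /= expr1 subrr => /eqP.
  by rewrite expf_eq0 /= => /eqP.
pose g (i : nat) : F := if i == 0%N then 1 else if i == 1%N then -1
   else if (i < k)%N then 0 else r (i - k)%N.
have gge i : (k <= i)%N -> g i = r (i - k)%N.
  move=> ki; rewrite /g ifF; last by lia.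
  rewrite ifF; last by lia.
  by rewrite ifF; last by lia.
have glt i : (2 <= i)%N -> (i < k)%N -> g i = 0.
  move=> i2 ik; rewrite /g ifF; last by lia.
  by rewrite ifF ?ik //; lia.
pose x := \row_(i < d) g i.
exists x; split.
- move=> j0; rewrite /hfun /=.
  under eq_bigr do rewrite mxE.
  under [X in _ - X]eq_bigr do rewrite mxE.
  have jd : (k + j0 < d)%N by have := ltn_ord j0; lia.
  rewrite (sum_at _ (o := Ordinal jd)) //=.
rewrite (@sum_lt _ d k (fun n => g n ^+ j0.+2)); last by lia.
  rewrite big_ltn; last by lia.
  rewrite big_ltn; last by lia.
  rewrite big_nat_cond big1 ?addr0; last first.
    move=> i /andP[/andP[i2 ik] _]; rewrite glt // expr0n //.
  rewrite (gge (k + j0)%N); last by lia.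
  have -> : (k + j0 - k = j0)%N by lia.
  by rewrite hr /g /= expr1n subrr.
- have d0 : (0 < d)%N by lia.
  apply/eqP => /rowP /(_ (Ordinal d0)); rewrite !mxE /g /= => /eqP.
  by rewrite oner_eq0.
have j1 : (1 < d - k)%N by lia.
have j3 : (3 < d - k)%N by [].
apply: (@rank_lt F (d-k) d _ (3%:R *: delta_mx 0 (Ordinal j3) - 5%:R *: delta_mx 0 (Ordinal j1))).
  apply/eqP => /rowP /(_ (Ordinal j3)); rewrite !mxE /=.
  rewrite mulr1 mulr0 subr0; apply/eqP; apply: (natr_nz hp) => //; lia.
rewrite mulmxBl -!scalemxAl -!rowE; apply/rowP => i; rewrite !mxE !partial_hE /=.
rewrite mxE; case: (ltnP i k) => ik.
  have -> : (i == k + 3%N :> nat) = false by lia.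
  have -> : (i == k + 1%N :> nat) = false by lia.
  have h : g i ^+ 4 = g i ^+ 2.
    rewrite /g; case: ifP => _; first by rewrite !expr1n.
    case: ifP => _; first by ring.
    by rewrite ik !expr0n.
  rewrite h; ring.
rewrite (gge i ik) /=.
case: (eqVneq (i : nat) (k + 1)%N) => [e1|n1].
  have -> : (i - k = 1)%N by lia.
  rewrite r1 expr0n /=; ring.
case: (eqVneq (i : nat) (k + 3)%N) => [e3|n3].
  have -> : (i - k = 3)%N by lia.
  rewrite r3 expr0n /=; ring.
by rewrite /= subr0 !mulr0 subrr.
Qed.


Lemma part3 (d : nat) p (F : fieldType) k :
  p \in [pchar F] -> (d < p)%N -> (2 <= k)%N -> (k <= d - 1)%N -> (d - k <= 3)%N ->
  forall x : 'rV[F]_d, inH k x -> x != 0 -> \rank (jacH k x) = (d - k)%N.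
Proof.
move=> hp dp k2 kd m3 x xH x0.
have [//|[u u0 uJ]] := rank_full (jacH k x).
exfalso.
pose y (i : 'I_d) : F := x ord0 i.
have col i : \sum_(j < d - k) u ord0 j * (j.+2%:R * y i ^+ j.+1 *
      ((i < k)%N%:R - (i == k + j :> nat)%:R)) = 0.
  have := congr1 (fun M : 'M[F]_(1,d) => M ord0 i) uJ; rewrite !mxE => h.
  rewrite -[RHS]h; apply: eq_bigr => j _; by rewrite jacE.
pose c t := \sum_(j < d - k | nat_of_ord j == t) u ord0 j * t.+2%:R.
have hA z : \sum_(j < d - k) u ord0 j * (j.+2%:R * z ^+ j.+1) =
    z * (c 0%N + c 1%N * z + c 2%N * z ^+ 2).
  rewrite (@regroup _ _ (fun j t => u ord0 j * (t.+2%:R * z ^+ t.+1))) //.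
  rewrite !big_ord_recr big_ord0 /= add0r /c.
  rewrite !mulrA -!big_distrl /=.
  ring.
have hq : forall i : 'I_d, (i < k)%N -> y i != 0 ->
    c 0%N + c 1%N * y i + c 2%N * y i ^+ 2 = 0.
  move=> i ik yi.
  have e : forall j : 'I_(d - k), (i == k + j :> nat) = false by move=> j; lia.
  have := col i; under eq_bigr do rewrite e ik /= mulr0n mulr1n subr0 mulr1.
  by rewrite hA => /eqP; rewrite mulf_eq0 (negbTE yi) /= => /eqP.
have hs : forall t : nat, (t < 3)%N -> c t != 0 ->
    \sum_(i < d | (i < k)%N) y i ^+ t.+2 = 0.
  move=> t t3 ct.
  have [j /andP[jt uj]] : exists j : 'I_(d - k), (j == t :> nat) && (u ord0 j != 0).
    apply/existsP; apply: contraNT ct => /existsPn hn; rewrite /c big1 // => j jt.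
    by move: (hn j); rewrite jt /= negbK => /eqP ->; rewrite mul0r.
  have ckd : (k + j < d)%N by have := ltn_ord j; lia.
  have hc := col (Ordinal ckd).
  rewrite (bigD1 j) //= big1 ?addr0 in hc; last first.
    move=> j' nj.
    have -> : (k + j == k + j' :> nat) = false.
      by apply/negbTE; rewrite eqn_add2l eq_sym; exact: nj.
    have -> : (k + j < k)%N = false by lia.
    by rewrite /= mulr0n subrr !mulr0.
  move: hc; have -> : (k + j < k)%N = false by lia.
  rewrite eqxx /= mulr0n mulr1n sub0r => /eqP.
  rewrite !mulf_eq0 (negbTE uj) oppr_eq0 oner_eq0 orbF /=.
  have j2 : (j.+2%:R : F) != 0 by apply: (natr_nz hp) => //; have := ltn_ord j; lia.
  rewrite (negbTE j2) expf_eq0 /= => /eqP yck.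
  have := xH j; rewrite /hfun /= (sum_at _ (o := Ordinal ckd)) //.
  by rewrite /y in yck; rewrite yck expr0n subr0 (eqP jt).
have hcc : [|| c 0%N != 0, c 1%N != 0 | c 2%N != 0].
  have [j uj] : exists j, u ord0 j != 0.
    apply/existsP; apply: contraNT u0 => /existsPn hn; apply/eqP/rowP => j.
    by rewrite mxE; move: (hn j); rewrite negbK => /eqP.
  have cj : c j != 0.
    rewrite /c (sum_at _ (o := j)) // mulf_neq0 //.
    by apply: (natr_nz hp) => //; have := ltn_ord j; lia.
  have j3 : (j < 3)%N by have := ltn_ord j; lia.
  by move: cj; case: (nat_of_ord j) j3 => [|[|[|]]] //= _ ->; rewrite ?orbT.
case: (boolP [exists i : 'I_d, (i < k)%N && (y i != 0)]) => [/existsP [i0 /andP[i0k yi0]] | /existsPn hn].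
  exact: (core (c0 := c 0%N) (c1 := c 1%N) (c2 := c 2%N) hp dp i0k yi0 hq (hs 0%N isT) (hs 1%N isT) (hs 2%N isT) hcc).
move/eqP: x0; apply; apply/rowP => i; rewrite mxE.
case: (ltnP i k) => ik.
  by move: (hn i); rewrite ik /= negbK => /eqP.
have jd : (i - k < d - k)%N by have := ltn_ord i; lia.
have := xH (Ordinal jd); rewrite /hfun /=.
rewrite big1; last by move=> i' i'k; move: (hn i'); rewrite i'k /= negbK /y => /eqP ->; rewrite expr0n.
rewrite (sum_at _ (o := i)) /=; last by lia.
by rewrite sub0r => /eqP; rewrite oppr_eq0 expf_eq0 /= => /eqP.
Qed.

Theorem proposition3 (d : nat) (hd : (3 <= d)%N) :
  exists C : nat, forall p : nat, prime p -> (C < p)%N ->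
  forall F : closedFieldType, is_alg_closure_Fp p F ->
  forall k : nat, (2 <= k)%N -> (k <= d - 1)%N ->
    ((4 <= d - k)%N ->
       exists x : 'rV[F]_d, [/\ inH k x, x != 0 & (\rank (jacH k x) < d - k)%N])
    /\
    ((d - k <= 3)%N ->
       forall x : 'rV[F]_d, inH k x -> x != 0 -> \rank (jacH k x) = (d - k)%N).
Proof.
exists d => p pp dp F [hp _] k k2 kd; split.
- exact: part4 hp dp k2 kd.
- exact: part3 hp dp k2 kd.
Qed.
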